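(* Let $q\ge2$, let $r$ be a positive integer, and let $f$ be a positive real-valued function on the nonnegative integers that is $q$-quasimultiplicative with parameter $r$, i.e. $f(q^{k+r}a+b)=f(a)f(b)$ for all nonnegative integers $a,b,k$ with $0\le b<q^k$. Let $\mathcal{M}_k=\{0,1,\dots,q^k-1\}$ and $$F(x,t)=\sum_{k\ge0}x^k\sum_{n\in\mathcal{M}_k}f(n)^t.$$ Let $\mathcal{B}$ be the set of all positive integers not divisible by $q$ whose $q$-ary representation does not contain the block $0^r$, let $\ell(n)$ be the length of the $q$-ary representation of $n$, and $B(x,t)=\sum_{n\in\mathcal{B}}x^{\ell(n)}f(n)^t$. Then, as formal power series in $x$, $$F(x,t)=\frac{1}{1-x}\cdot\frac{1}{1-\frac{x^r}{1-x}B(x,t)}\Bigl(1+(1+x+\dots+x^{r-1})B(x,t)\Bigr)=\frac{1+(1+x+\dots+x^{r-1})B(x,t)}{1-x-x^rB(x,t)}.$$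
   Context: The $q$-ary representation of a positive integer has no leading zeros. *)

(* Defs.v *)
From HB Require Import structures.
From mathcomp Require Import all_boot all_order all_algebra.
From mathcomp Require Import all_classical all_reals.
From mathcomp Require Import exp.
Set Implicit Arguments. Unset Strict Implicit. Unset Printing Implicit Defensive.
Import Order.TTheory GRing.Theory Num.Theory.
Local Open Scope ring_scope.

(* q-ary digits of n, least significant first; [::] for n = 0 (no leading
   zeros).  The fuel n suffices since q >= 2 implies n %/ q < n for n > 0. *)
Fixpoint digits_aux (q fuel n : nat) : seq nat :=
  if fuel is fuel'.+1 then
    if n == 0%N then [::] else (n %% q)%N :: digits_aux q fuel' (n %/ q)
  else [::].
Definition digits (q n : nat) : seq nat := digits_aux q n n.

Definition qlen (q n : nat) : nat := size (digits q n).

Definition quasimult (R : realType) (q r : nat) (f : nat -> R) : Prop :=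
  forall a b k : nat, (b < q ^ k)%N -> f (q ^ (k + r) * a + b)%N = f a * f b.

Definition inB (q r n : nat) : bool :=
  [&& (0 < n)%N, ~~ (q %| n)%N & ~~ infix (nseq r 0%N) (digits q n)].

Definition fps (R : realType) := nat -> R.
Definition fps_one (R : realType) : fps R := fun n => (n == 0%N)%:R.
Definition fps_Xn (R : realType) (k : nat) : fps R := fun n => (n == k)%:R.
Definition fps_add (R : realType) (a b : fps R) : fps R := fun n => a n + b n.
Definition fps_sub (R : realType) (a b : fps R) : fps R := fun n => a n - b n.
Definition fps_mul (R : realType) (a b : fps R) : fps R :=
  fun n => \sum_(i < n.+1) a i * b (n - i)%N.
Definition fps_geomr (R : realType) (r : nat) : fps R := fun n => (n < r)%N%:R.

Definition Fser (R : realType) (q : nat) (f : nat -> R) (t : R) : fps R :=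
  fun k => \sum_(n < q ^ k) f n `^ t.

(* B(x,t) = sum_{n in B} x^{ell(n)} f(n)^t ; the n with ell(n) = m are < q^m *)
Definition Bser (R : realType) (q r : nat) (f : nat -> R) (t : R) : fps R :=
  fun m => \sum_(n < q ^ m | inB q r n && (qlen q n == m)) f n `^ t.

(* Main.v *)
Require Import Defs.
From HB Require Import structures.
From mathcomp Require Import all_boot all_order all_algebra.
From mathcomp Require Import all_classical all_reals.
From mathcomp Require Import exp.
From mathcomp Require Import zify.

Module Helpers.
Set Implicit Arguments. Unset Strict Implicit. Unset Printing Implicit Defensive.

Lemma digits_aux_fuel q f1 f2 n : 1 < q -> n <= f1 -> n <= f2 ->
  digits_aux q f1 n = digits_aux q f2 n.
Proof.
move=> hq; elim: f1 f2 n => [|f1 IH] [|f2] n /= h1 h2.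
- by [].
- by move: h1; rewrite leqn0 => /eqP ->.
- by move: h2; rewrite leqn0 => /eqP ->.
case: eqP => // /eqP n0; congr cons; apply: IH.
  have : n %/ q < n by rewrite ltn_Pdiv // lt0n.
  by lia.
have : n %/ q < n by rewrite ltn_Pdiv // lt0n.
by lia.
Qed.

Lemma digits0 q : digits q 0 = [::].
Proof. by []. Qed.

Lemma digitsS q n : 1 < q -> 0 < n -> digits q n = (n %% q) :: digits q (n %/ q).
Proof.
move=> hq n0; rewrite /digits; case: n n0 => // n _ /=.
congr cons; apply: digits_aux_fuel => //.
have : n.+1 %/ q < n.+1 by rewrite ltn_Pdiv.
by lia.
Qed.

Lemma qlen0 q : qlen q 0 = 0.
Proof. by []. Qed.

Lemma qlenS q n : 1 < q -> 0 < n -> qlen q n = (qlen q (n %/ q)).+1.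
Proof. by move=> hq n0; rewrite /qlen digitsS. Qed.

Lemma qlen_le q m k : 1 < q -> (qlen q m <= k) = (m < q ^ k).
Proof.
move=> hq; elim: k m => [|k IH] m.
  case: m => [|m]; first by rewrite qlen0.
  by rewrite qlenS.
case: m => [|m]; first by rewrite qlen0 expn_gt0 (ltnW hq).
by rewrite qlenS // ltnS IH ltn_divLR ?expnSr // ltnW.
Qed.

Lemma qlen_eq q m n : 1 < q -> 0 < n -> (qlen q m == n) = (q ^ n.-1 <= m < q ^ n).
Proof.
move=> hq n0; rewrite eqn_leq qlen_le // andbC; congr andb.
by rewrite -{1}(prednK n0) ltnNge qlen_le // -leqNgt.

Qed.

Lemma qlen_gt0 q m : 1 < q -> 0 < m -> 0 < qlen q m.
Proof. by move=> hq m0; rewrite qlenS. Qed.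

Lemma qlen_shift q k a b : 1 < q -> 0 < a -> b < q ^ k ->
  qlen q (q ^ k * a + b) = qlen q a + k.
Proof.
move=> hq a0 bk; have la := qlen_gt0 hq a0.
apply/eqP; rewrite qlen_eq ?addn_gt0 ?la //.
have h1 : a < q ^ qlen q a by rewrite -qlen_le.
have h2 : q ^ (qlen q a).-1 <= a.
  by rewrite leqNgt -qlen_le // -ltnNge prednK.
rewrite -(prednK la) addSn /= expnD expnS.
rewrite -(prednK la) expnS in h1.
set L := q ^ _.-1 in h1 h2 *; set Q := q ^ k in bk *.
rewrite ?expnD -/L -/Q.
apply/andP; split.
  by rewrite mulnC; apply: leq_trans (leq_addr _ _); rewrite leq_mul2l h2 orbT.
have : Q * a + b < Q * (a + 1) by lia.
move=> h; apply: leq_trans h _.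
by rewrite addn1 mulnA [X in _ <= X]mulnC leq_mul2l h1 orbT.
Qed.

Definition block q r m := infix (nseq r 0) (digits q m).
Definition Ac q r s m := (q ^ s %| m) && inB q r (m %/ q ^ s).
Definition Pc q r i m := ((m %/ q ^ i) %% q ^ r == 0) && inB q r (m %/ q ^ (i + r)).

Lemma inBE q r n : inB q r n = [&& 0 < n, ~~ (q %| n) & ~~ block q r n].
Proof. by []. Qed.

Lemma block0 q r : 0 < r -> block q r 0 = false.
Proof. by case: r. Qed.

Lemma dvd_expS q r m : 0 < q -> q %| m -> (q ^ r.+1 %| m) = (q ^ r %| m %/ q).
Proof.
move=> q0 qm; rewrite -{1}(divnK qm) expnS mulnC dvdn_pmul2r //.
Qed.

Lemma prefix_digits q r m : 1 < q -> 0 < m ->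
  prefix (nseq r 0) (digits q m) = (q ^ r %| m).
Proof.
move=> hq; elim: r m => [|r IH] m m0; first by rewrite expn0 dvd1n prefix0s.
rewrite digitsS //= eq_sym.
have -> : (m %% q == 0) = (q %| m) by [].
have [qm|nqm] := boolP (q %| m).
  rewrite /= dvd_expS ?(ltnW hq) // IH //.
  by rewrite divn_gt0 ?(ltnW hq) // dvdn_leq.
rewrite /=; apply/esym/negP => h; apply/negP: nqm.
by rewrite negbK; apply: (dvdn_trans _ h); rewrite expnS dvdn_mulr.
Qed.

Lemma blockS q r m : 1 < q -> 0 < m ->
  block q r m = (q ^ r %| m) || block q r (m %/ q).
Proof. by move=> hq m0; rewrite /block digitsS // infix_consl -digitsS // prefix_digits. Qed.

Lemma block_div q r m : 1 < q -> 0 < r -> block q r (m %/ q) -> block q r m.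
Proof.
move=> hq hr; case: m => [|m]; first by rewrite div0n.
by rewrite (blockS r (m := m.+1) hq) // => ->; rewrite orbT.
Qed.

Lemma block_divX q r m k : 1 < q -> 0 < r -> block q r (m %/ q ^ k) -> block q r m.
Proof.
move=> hq hr; elim: k => [|k IH]; first by rewrite expn0 divn1.
by rewrite expnSr divnMA => /(block_div hq hr) /IH.
Qed.

Lemma nb_mul q r a s : 1 < q -> 0 < r -> 0 < a -> ~~ (q %| a) -> ~~ block q r a ->
  s < r -> ~~ block q r (q ^ s * a).
Proof.
move=> hq hr a0 qa ba; elim: s => [|s IH] sr; first by rewrite mul1n.
have q0 : 0 < q by lia.
rewrite blockS ?muln_gt0 ?expn_gt0 ?q0 ?a0 //.
rewrite expnS -mulnA mulKn // (negbTE (IH (ltnW sr))) orbF.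
apply/negP => h; apply/negP: qa; apply/negPn.
rewrite mulnA -expnS -(subnKC (ltnW sr)) expnD dvdn_pmul2l ?expn_gt0 ?q0 // in h.
apply: dvdn_trans h; have -> : r - s.+1 = (r - s.+2).+1 by lia.
by rewrite expnS dvdn_mulr.
Qed.


Lemma Pc_S q r i m : Pc q r i.+1 m = Pc q r i (m %/ q).
Proof. by rewrite /Pc addSn !expnS !divnMA. Qed.

Lemma Pc_0 q r m : Pc q r 0 m = (q ^ r %| m) && inB q r (m %/ q ^ r).
Proof. by rewrite /Pc expn0 divn1 add0n. Qed.

Lemma countP q r N m : 1 < q -> 0 < r -> m < q ^ N ->
  \sum_(i < N) (Pc q r i m : nat) = block q r m.
Proof.
move=> hq hr; have q0 : 0 < q by lia.
elim: N m => [|N IH] m hm.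
  by move: hm; rewrite expn0 ltnS leqn0 => /eqP ->; rewrite big_ord0 block0.
rewrite big_ord_recl; under eq_bigr do rewrite lift0 Pc_S.
rewrite IH; last by rewrite ltn_divLR // -expnSr.
case: (posnP m) => [->|m0].
  by rewrite Pc_0 !div0n inBE /= andbF block0.
rewrite (blockS r hq m0) Pc_0.
have [bq|bq] := boolP (block q r (m %/ q)).
  rewrite orbT; case: (q ^ r %| m) / boolP => //= hd.
  case hB : (inB q r (m %/ q ^ r)) => //; exfalso.
  move: hB; rewrite inBE => /and3P [a0 qa ba].
  have e : m %/ q = q ^ r.-1 * (m %/ q ^ r).
    have eq : q ^ r = q ^ r.-1 * q by rewrite -expnSr prednK.
    by rewrite -{1}(divnK hd) eq mulnA mulnK // mulnC.
  by move: bq; rewrite e; apply/negP; apply: nb_mul => //; rewrite prednK // ltnSn.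
rewrite orbF /= addn0; case hd : (q ^ r %| m) => //=.
have q1 : q %| m by apply: dvdn_trans hd; rewrite -(prednK hr) expnS dvdn_mulr.
have e : m %/ q ^ r = m %/ q %/ q ^ r.-1 by rewrite -divnMA -expnS prednK.
rewrite inBE divn_gt0 ?expn_gt0 ?q0 // dvdn_leq //=.
suff -> : ~~ (q %| m %/ q ^ r) && ~~ block q r (m %/ q ^ r) by [].
apply/andP; split.
  apply/negP => qa; apply/negP: bq; apply/negPn.
  rewrite blockS //; last by rewrite divn_gt0 // dvdn_leq.
  apply/orP; left.
  by rewrite -dvd_expS // -(divnK hd) expnS mulnC [X in _ %| X]mulnC dvdn_pmul2l ?expn_gt0 ?q0.
apply/negP => h; apply/negP: bq; apply/negPn; apply: (block_divX (k := r.-1) hq hr).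
by rewrite -divnMA -expnS prednK.
Qed.

Lemma Ac_S q r s m : 0 < q -> q %| m -> Ac q r s.+1 m = Ac q r s (m %/ q).
Proof. by move=> q0 qm; rewrite /Ac dvd_expS // expnS divnMA. Qed.

Lemma countA_gen q r k m : 1 < q -> 0 < r -> k <= r -> 0 < m ->
  \sum_(s < k) (Ac q r s m : nat) = ~~ block q r m && ~~ (q ^ k %| m).
Proof.
move=> hq hr; have q0 : 0 < q by lia.
elim: k m => [|k IH] m kr m0; first by rewrite big_ord0 expn0 dvd1n andbF.
rewrite big_ord_recl.
have [qm|qm] := boolP (q %| m).
  under eq_bigr do rewrite lift0 Ac_S //.
  have m1 : 0 < m %/ q by rewrite divn_gt0 // dvdn_leq.
  rewrite IH ?(ltnW kr) // /Ac expn0 dvd1n divn1 inBE qm /= andbF add0n.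
  rewrite dvd_expS // (blockS r hq m0).
  case: (boolP (q ^ k %| m %/ q)) => h; first by rewrite !andbF.
  suff -> : (q ^ r %| m) = false by [].
  apply/negP => hr'; apply/negP: h; rewrite -dvd_expS //.
  by rewrite negbK; apply: (dvdn_trans _ hr'); apply: dvdn_exp2l.
rewrite big1 ?addn0; last first.
  move=> i _; rewrite lift0 /Ac; case h : (q ^ i.+1 %| m) => //; exfalso.
  by move/negP: qm; apply; apply: (dvdn_trans _ h); rewrite expnS dvdn_mulr.
have -> : q ^ k.+1 %| m = false.
  by apply/negP => h; move/negP: qm; apply; apply: dvdn_trans h; rewrite expnS dvdn_mulr.
by rewrite andbT /Ac expn0 dvd1n divn1 inBE m0 qm.
Qed.

Lemma countA q r m : 1 < q -> 0 < r -> 0 < m ->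
  \sum_(s < r) (Ac q r s m : nat) = ~~ block q r m.
Proof.
move=> hq hr m0; rewrite countA_gen //=.
by case h : (q ^ r %| m); rewrite ?andbT // (blockS r hq m0) h.
Qed.

Import GRing.Theory.
Local Open Scope ring_scope.

Lemma sum_perm (R : nmodType) (T S : seq nat) (P : pred nat) (F : nat -> R) :
  uniq T -> uniq S -> (forall x, (x \in S) = (x \in T) && P x) ->
  \sum_(x <- T | P x) F x = \sum_(x <- S) F x.
Proof.
move=> uT uS hS; rewrite -big_filter; apply: perm_big; apply: uniq_perm.
- exact: filter_uniq.
- exact: uS.
by move=> x; rewrite mem_filter hS andbC.
Qed.

Lemma ord_sum_seq (R : nmodType) K (P : pred nat) (F : nat -> R) :
  \sum_(a < K | P a) F a = \sum_(a <- seq.filter P (iota 0 K)) F a.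
Proof. by rewrite big_filter -big_mkord /index_iota subn0. Qed.

Lemma mem_idx q n x : (1 < q)%N -> (0 < n)%N ->
  (x \in index_iota (q ^ n.-1) (q ^ n)) = (qlen q x == n).
Proof. by move=> hq n0; rewrite mem_index_iota qlen_eq. Qed.

Lemma termA (R : nmodType) q r (g : nat -> R) n s : (1 < q)%N -> (0 < r)%N -> (0 < n)%N ->
  (forall s a, g (q ^ s * a)%N = g a) ->
  \sum_(m <- index_iota (q ^ n.-1) (q ^ n) | Ac q r s m) g m =
  if (s <= n)%N then \sum_(a < q ^ (n - s) | inB q r a && (qlen q a == n - s)%N) g a else 0.
Proof.
move=> hq hr n0 hg; have q0 : (0 < q)%N by lia.
have qs0 : (0 < q ^ s)%N by rewrite expn_gt0 q0.
case: leqP => sn; last first.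
  apply: big1_seq => x /andP [/andP [hd _] hx]; exfalso.
  move: hx; rewrite mem_index_iota => /andP [hx1 hx2].
  have x0 : (0 < x)%N by apply: leq_trans hx1; rewrite expn_gt0 q0.
  have h1 := dvdn_leq x0 hd.
  have : (q ^ n < q ^ s)%N by rewrite ltn_exp2l.
  lia.
rewrite (ord_sum_seq _ (fun a => inB q r a && (qlen q a == n - s)%N)) /=.
under [RHS]eq_bigr do rewrite -(hg s).
rewrite -(big_map (fun a => q ^ s * a)%N predT).
apply: sum_perm; first exact: iota_uniq.
  rewrite map_inj_uniq ?filter_uniq ?iota_uniq //.
  by move=> a b /eqP; rewrite eqn_pmul2l // => /eqP.
move=> x; apply/mapP/andP.
  case=> a; rewrite mem_filter mem_iota => /andP [/andP [hB /eqP hl] _] ->.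
  have a0 : (0 < a)%N by move: hB; rewrite inBE => /and3P [].
  split.
    by rewrite mem_idx // -[(q ^ s * a)%N]addn0 qlen_shift ?expn_gt0 ?q0 // hl subnK.
  by rewrite /Ac dvdn_mulr //= mulKn.
rewrite mem_idx // /Ac => -[/eqP hl /andP [hd hB]].
have a0 : (0 < x %/ q ^ s)%N by move: hB; rewrite inBE => /and3P [].
have ex : x = (q ^ s * (x %/ q ^ s) + 0)%N by rewrite addn0 mulnC divnK.
exists (x %/ q ^ s)%N; last by rewrite mulnC divnK.
rewrite mem_filter mem_iota hB /= add0n.
move: hl; rewrite {1}ex qlen_shift ?expn_gt0 ?q0 // => hl.
have -> : qlen q (x %/ q ^ s) = (n - s)%N by lia.
by rewrite eqxx /= -qlen_le //; lia.
Qed.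

Lemma termP (R : nzRingType) q r (g : nat -> R) n i : (1 < q)%N -> (0 < r)%N -> (0 < n)%N ->
  (forall k a b, (b < q ^ k)%N -> g (q ^ (k + r) * a + b)%N = g a * g b) ->
  \sum_(m <- index_iota (q ^ n.-1) (q ^ n) | Pc q r i m) g m =
  if (i + r <= n)%N then
    (\sum_(a < q ^ (n - (i + r)) | inB q r a && (qlen q a == n - (i + r))%N) g a)
      * (\sum_(b < q ^ i) g b)
  else 0.
Proof.
move=> hq hr n0 hg; have q0 : (0 < q)%N by lia.
have qi0 : (0 < q ^ i)%N by rewrite expn_gt0 q0.
have qir0 : (0 < q ^ (i + r))%N by rewrite expn_gt0 q0.
case: leqP => irn; last first.
  apply: big1_seq => x /andP [/andP [_ hB] hx]; exfalso.
  move: hx; rewrite mem_index_iota => /andP [hx1 hx2].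
  move: hB; rewrite inBE divn_gt0 // => /and3P [h1 _ _].
  have : (q ^ n < q ^ (i + r))%N by rewrite ltn_exp2l.
  lia.
rewrite (ord_sum_seq _ (fun a => inB q r a && (qlen q a == n - (i + r))%N)) /=.
rewrite -(big_mkord (fun=> true)) /index_iota subn0 big_distrl /=.
have -> : \sum_(a <- [seq a <- iota 0 (q ^ (n - (i + r))) | inB q r a & qlen q a == (n - (i + r))%N])
      g a * \sum_(b <- iota 0 (q ^ i)) g b =
    \sum_(a <- [seq a <- iota 0 (q ^ (n - (i + r))) | inB q r a & qlen q a == (n - (i + r))%N])
      \sum_(b <- iota 0 (q ^ i)) g (q ^ (i + r) * a + b)%N.
  apply: eq_bigr => a _; rewrite big_distrr /= big_seq [RHS]big_seq.
  by apply: eq_bigr => b; rewrite mem_iota add0n => /andP [_ /hg ->].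
rewrite -(big_allpairs_dep (h := fun a b => q ^ (i + r) * a + b)%N).
apply: sum_perm; first exact: iota_uniq.
  rewrite allpairs_uniq ?filter_uniq ?iota_uniq //.
  move=> [a b] [a' b'] /allpairsP [[a1 b1] /= [_ hb1 [-> ->]]].
  move=> /allpairsP [[a2 b2] /= [_ hb2 [-> ->]]] /= e.
  move: hb1 hb2; rewrite !mem_iota !add0n => /andP [_ hb1] /andP [_ hb2].
  have hb1' : (b1 < q ^ (i + r))%N := leq_trans hb1 (leq_pexp2l q0 (leq_addr r i)).
  have hb2' : (b2 < q ^ (i + r))%N := leq_trans hb2 (leq_pexp2l q0 (leq_addr r i)).
  have ea := congr1 (fun x => x %/ q ^ (i + r))%N e.
  have eb := congr1 (fun x => x %% q ^ (i + r))%N e.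
  rewrite /= ![(q ^ (i + r) * _)%N]mulnC !divnMDl // !divn_small // !addn0 in ea.
  rewrite /= ![(q ^ (i + r) * _)%N]mulnC !modnMDl !modn_small // in eb.
  by rewrite ea eb.
move=> x; apply/allpairsP/andP.
  case=> -[a b] /= []; rewrite mem_filter mem_iota => /andP [/andP [hB /eqP hl] _].
  rewrite mem_iota add0n => /andP [_ hb] ->.
  have a0 : (0 < a)%N by move: hB; rewrite inBE => /and3P [].
  have hb' : (b < q ^ (i + r))%N := leq_trans hb (leq_pexp2l q0 (leq_addr r i)).
  split.
    by rewrite mem_idx // qlen_shift // hl subnK.
  rewrite /Pc; apply/andP; split.
    have -> : (q ^ (i + r) * a + b = (q ^ r * a) * q ^ i + b)%N.
      by rewrite expnD; lia.
    by rewrite divnMDl // divn_small // addn0 modnMr.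
  by rewrite mulnC divnMDl // divn_small // addn0.
rewrite mem_idx // /Pc => -[/eqP hl /andP [/eqP hm hB]].
have a0 : (0 < x %/ q ^ (i + r))%N by move: hB; rewrite inBE => /and3P [].
have e1 := divn_eq x (q ^ i).
have e2 := divn_eq (x %/ q ^ i) (q ^ r).
rewrite hm addn0 -divnMA -expnD in e2.
have ex : x = (q ^ (i + r) * (x %/ q ^ (i + r)) + x %% q ^ i)%N.
  by rewrite {1}e1 {1}e2 expnD; lia.
exists ((x %/ q ^ (i + r))%N, (x %% q ^ i)%N) => /=; split => //.
  rewrite mem_filter mem_iota hB /= add0n.
  have hb' : (x %% q ^ i < q ^ (i + r))%N.
    exact: leq_trans (ltn_pmod _ qi0) (leq_pexp2l q0 (leq_addr r i)).
  move: hl; rewrite {1}ex qlen_shift // => hl.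
  have -> : qlen q (x %/ q ^ (i + r)) = (n - (i + r))%N by lia.
  by rewrite eqxx /= -qlen_le //; lia.
by rewrite mem_iota add0n leq0n ltn_pmod.
Qed.

Lemma boolmul (R : nzRingType) (b : bool) (x : R) : b%:R * x = if b then x else 0.
Proof. by case: b; rewrite ?mul1r ?mul0r. Qed.

Lemma sum_delta (R : nzRingType) (N j : nat) (G : nat -> R) :
  \sum_(k < N) G k * ((k : nat) == j)%:R = if (j < N)%N then G j else 0.
Proof.
elim: N => [|N IH]; first by rewrite big_ord0.
rewrite big_ord_recr /= IH.
case: (ltngtP j N) => h.
- have h1 : (j < N.+1)%N by lia.
  by rewrite h1 mulr0 addr0.
- have h1 : (j < N.+1)%N = false by lia.
  by rewrite h1 mulr0 addr0.
- by rewrite h ltnSn mulr1 add0r.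
Qed.

Lemma sum_delta_rev (R : nzRingType) (n j : nat) (G : nat -> R) :
  \sum_(k < n.+1) G k * ((n - k)%N == j)%:R = if (j <= n)%N then G (n - j)%N else 0.
Proof.
rewrite (reindex_inj rev_ord_inj) /=.
have -> : \sum_(k < n.+1) G (n.+1 - k.+1)%N * ((n - (n.+1 - k.+1))%N == j)%:R =
          \sum_(k < n.+1) G (n - k)%N * ((k : nat) == j)%:R.
  apply: eq_bigr => k _; rewrite subSS subKn //; exact: (ltn_ord k).
by rewrite (sum_delta _ _ (fun k => G (n - k)%N)) ltnS.
Qed.

Lemma sum_delta_l (R : comNzRingType) (p r : nat) (G : nat -> R) :
  \sum_(u < p.+1) ((u : nat) == r)%:R * G (p - u)%N = if (r <= p)%N then G (p - r)%N else 0.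
Proof.
under eq_bigr do rewrite mulrC.
by rewrite (sum_delta _ _ (fun u => G (p - u)%N)) ltnS.
Qed.

End Helpers.
Import Helpers.
Import Order.TTheory GRing.Theory Num.Theory.
Local Open Scope ring_scope.

Theorem proposition11 (R : realType) (q r : nat) (f : nat -> R) (t : R)
  (hq : (2 <= q)%N) (hr : (0 < r)%N)
  (hpos : forall n, 0 < f n) (hf : quasimult q r f) :
  fps_mul (Fser q f t)
    (fps_sub (fps_sub (fps_one R) (fps_Xn R 1))
             (fps_mul (fps_Xn R r) (Bser q r f t)))
  = fps_add (fps_one R) (fps_mul (fps_geomr R r) (Bser q r f t)).
Proof.
have q0 : (0 < q)%N by lia.
have f0 : f 0%N = 1.
  have := hf 0%N 0%N 0%N isT; rewrite muln0 addn0 => h.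
  apply: (mulfI (lt0r_neq0 (hpos 0%N))); by rewrite mulr1 -h.
have fmul : forall s a, f (q ^ s * a)%N = f a.
  move=> s a.
  have h1 := hf (q ^ s * a)%N 0%N 0%N isT.
  have qs : (0 < q ^ s)%N by rewrite expn_gt0 q0.
  have h2 := hf a 0%N s qs.
  rewrite f0 mulr1 in h1; rewrite f0 mulr1 in h2.
  rewrite -h1 -h2; congr f; rewrite !addn0 add0n expnD; lia.
pose g m := f m `^ t.
have gmul : forall s a, g (q ^ s * a)%N = g a by move=> s a; rewrite /g fmul.
have g2 : forall k a b, (b < q ^ k)%N -> g (q ^ (k + r) * a + b)%N = g a * g b.
  by move=> k a b hb; rewrite /g hf // powRM // ltW // hpos.
have g0 : g 0%N = 1 by rewrite /g f0 powR1.
apply: funext => n.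
rewrite /fps_mul /fps_sub /fps_add /fps_one /fps_Xn /fps_geomr.
under eq_bigr => k _ do rewrite (sum_delta_l _ _ (Bser q r f t)).
under eq_bigr do rewrite !mulrBr.
rewrite !sumrB (sum_delta_rev _ _ (Fser q f t)) (sum_delta_rev _ _ (Fser q f t)) /=.
have B0 : Bser q r f t 0 = 0.
  by rewrite /Bser expn0 big_mkcond big_ord1 /=.
case: n => [|n].
  rewrite !big_ord1 /= subn0 (leqNgt r 0) hr /= mulr0 !subr0 B0 mulr0 addr0.
  by rewrite /Fser expn0 big_ord1 /= f0 powR1.
have hF : Fser q f t n.+1 = Fser q f t n + \sum_(m <- index_iota (q ^ n) (q ^ n.+1)) g m.
  rewrite /Fser -(big_mkord (fun _ => true) (fun n0 => f n0 `^ t)) -(big_mkord (fun _ => true) (fun n0 => f n0 `^ t)).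
  rewrite (big_cat_nat _ (n := q ^ n)) //=.
  exact: leq_pexp2l q0 (leqnSn n).
have hL : \sum_(m <- index_iota (q ^ n) (q ^ n.+1)) g m =
    \sum_(s < r) (if (s <= n.+1)%N then Bser q r f t (n.+1 - s)%N else 0)
  + \sum_(i < n.+1) (if (i + r <= n.+1)%N then Bser q r f t (n.+1 - (i + r))%N * Fser q f t i else 0).
  have -> : \sum_(m <- index_iota (q ^ n) (q ^ n.+1)) g m =
      \sum_(m <- index_iota (q ^ n) (q ^ n.+1))
        ((\sum_(s < r) (Ac q r s m)%:R + \sum_(i < n.+1) (Pc q r i m)%:R) * g m).
    rewrite big_seq [RHS]big_seq; apply: eq_bigr => m; rewrite mem_index_iota => /andP [h1 h2].
    have m0 : (0 < m)%N by apply: leq_trans h1; rewrite expn_gt0 q0.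
    rewrite -!natr_sum countA // countP //.
    by case: (block q r m); rewrite /= ?add0r ?addr0 mul1r.
  under eq_bigr do rewrite mulrDl. rewrite big_split /=.
  congr (_ + _).
    under eq_bigr do rewrite big_distrl /=.
    rewrite exchange_big; apply: eq_bigr => s _.
    under eq_bigr do rewrite boolmul.
    by rewrite -big_mkcond (termA (n := n.+1)).
  under eq_bigr do rewrite big_distrl /=.
  rewrite exchange_big; apply: eq_bigr => i _.
  under eq_bigr do rewrite boolmul.
  by rewrite -big_mkcond (termP (n := n.+1)).
rewrite subn0 subn1 /= hF hL.
have hP : \sum_(i < n.+2) Fser q f t i *
     (if (r <= n.+1 - i)%N then Bser q r f t (n.+1 - i - r)%N else 0) =
   \sum_(i < n.+1) (if (i + r <= n.+1)%N then Bser q r f t (n.+1 - (i + r))%N * Fser q f t i else 0).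
  rewrite big_ord_recr /= subnn (leqNgt r 0) hr /= mulr0 addr0.
  apply: eq_bigr => i _.
  have hi : (i <= n.+1)%N by apply: ltnW; apply: (ltn_ord i).
  rewrite leq_subRL // -subnDA.
  by case: ifP; rewrite ?mulr0 // mulrC.
have hA : \sum_(s < r) (if (s <= n.+1)%N then Bser q r f t (n.+1 - s)%N else 0) =
    \sum_(i < n.+2) (i < r)%:R * Bser q r f t (n.+1 - i)%N.
  rewrite (big_ord_widen (r + n.+2) (fun s => if (s <= n.+1)%N then Bser q r f t (n.+1 - s)%N else 0) (leq_addr _ _)).
  rewrite [RHS](big_ord_widen (r + n.+2) (fun i => (i < r)%:R * Bser q r f t (n.+1 - i)%N) (leq_addl _ _)).
  rewrite big_mkcond [RHS]big_mkcond; apply: eq_bigr => i _ /=.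
  rewrite ltnS; case: (i < r)%N; case: (i <= n.+1)%N; by rewrite ?mul1r ?mul0r.
rewrite hP -hA.
set A := \sum_(s < r) _; set P := \sum_(i < n.+1) _.
by rewrite add0r [Fser q f t n + _]addrC !addrK.
Qed.
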